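(* Let $a_1,\ldots,a_d,b$ be positive integers and $f=\frac1b(a_1,\ldots,a_d)\in\mathbb R^d$. Then the simplex $P=\operatorname{conv}\{e_1,\ldots,e_d,-f\}\subset\mathbb R^d$ is reflexive with respect to the lattice $N'=\mathbb Z^d+\mathbb Z\cdot f$ if and only if $a_1+\cdots+a_d=bc$ for some integer $c$ and each $a_i$ divides $b(c+1)$.
   Context: $e_1,\ldots,e_d$ is the standard basis of $\mathbb R^d$. A lattice polytope $P\subset N'_{\mathbb R}$ is reflexive if $0$ lies in its interior and the dual polytope $P^\circ=\{u\in M'_{\mathbb R}:\langle u,v\rangle\ge-1\ \forall v\in P\}$ has vertices in the dual lattice $M'=\operatorname{Hom}(N',\mathbb Z)$. *)

(* Defs.v *)
From HB Require Import structures.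
From mathcomp Require Import all_boot all_order all_algebra.
From mathcomp Require Import all_classical all_reals topology normedtype.
Set Implicit Arguments. Unset Strict Implicit. Unset Printing Implicit Defensive.
Import Order.TTheory GRing.Theory Num.Theory.
Import numFieldNormedType.Exports.
Local Open Scope classical_set_scope.
Local Open Scope ring_scope.

Section Defs.
Variable R : realType.
Variable d : nat.

Definition dotv (u v : 'rV[R]_d) : R := \sum_(i < d) u ord0 i * v ord0 i.

Definition evec (i : 'I_d) : 'rV[R]_d := \row_j (i == j)%:R.

Definition fvec (a : 'I_d -> nat) (b : nat) : 'rV[R]_d :=
  \row_i ((a i)%:R / b%:R).

Definition conv (S : seq 'rV[R]_d) : set 'rV[R]_d :=
  [set x | exists w : 'I_(size S) -> R,
     (forall i, 0 <= w i) /\ \sum_i w i = 1 /\ x = \sum_i w i *: S`_i].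

Definition latticeN' (f : 'rV[R]_d) : set 'rV[R]_d :=
  [set v | exists (z : 'I_d -> int) (k : int),
     v = \row_i (z i)%:~R + k%:~R *: f].

(* dual lattice M' = Hom(N', Z) viewed inside the dual space R^d *)
Definition dual_lattice (L : set 'rV[R]_d) : set 'rV[R]_d :=
  [set u | forall v, L v -> exists z : int, dotv u v = z%:~R].

Definition polar (P : set 'rV[R]_d) : set 'rV[R]_d :=
  [set u | forall v, P v -> -1 <= dotv u v].

Definition vertices (Q : set 'rV[R]_d) : set 'rV[R]_d :=
  [set u | Q u /\ forall x y (t : R), Q x -> Q y -> 0 < t < 1 ->
             u = t *: x + (1 - t) *: y -> x = u /\ y = u].

Definition lattice_polytope (L P : set 'rV[R]_d) : Prop := vertices P `<=` L.

Definition reflexive_polytope (L P : set 'rV[R]_d) : Prop :=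
  [/\ lattice_polytope L P, interior P 0 & vertices (polar P) `<=` dual_lattice L].

Definition simplexP (f : 'rV[R]_d) : set 'rV[R]_d :=
  conv (rcons [seq evec i | i <- enum 'I_d] (- f)).

End Defs.

(* Main.v *)
Require Import Defs.
From HB Require Import structures.
From mathcomp Require Import all_boot all_order all_algebra.
From mathcomp Require Import all_classical all_reals topology normedtype.
From mathcomp Require Import ring lra.
Import Order.TTheory GRing.Theory Num.Theory.
Import numFieldNormedType.Exports.
Local Open Scope classical_set_scope.
Local Open Scope ring_scope.

Section Gen.
Variable R : realType.
Variable d : nat.
Notation V := 'rV[R]_d.

Lemma sum_delta_s (n : nat) (i : 'I_n) (F : 'I_n -> V) :
  \sum_(j < n) (j == i)%:R *: F j = F i.
Proof.
rewrite (bigD1 i) //= eqxx scale1r big1 ?addr0 // => j /negbTE ->.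
by rewrite scale0r.
Qed.

Lemma sum_delta (n : nat) (i : 'I_n) :
  \sum_(j < n) ((j == i)%:R : R) = 1.
Proof.
rewrite (bigD1 i) //= eqxx big1 ?addr0 // => j /negbTE ->. by [].
Qed.

Lemma conv_vertex (S : seq V) x : vertices (conv S) x -> x \in S.
Proof.
move=> [[w [w0 [w1 xE]]] ext].
have [i wi] : exists i, 0 < w i.
  case: (boolP [exists i, 0 < w i]) => [/existsP //|/existsPn H].
  have : \sum_i w i = 0.
    by apply: big1 => j _; apply/eqP; rewrite eq_le w0 andbT leNgt H.
  by rewrite w1 => /eqP; rewrite oner_eq0.
have w1' := w1; rewrite (bigD1 i) //= in w1'.
have rest0 : 0 <= \sum_(j | j != i) w j by apply: sumr_ge0 => j _.
case: (eqVneq (w i) 1) => [wi1|wi1].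
  have H0 : forall j, j != i -> w j = 0.
    move=> j ji.
    have Hs : \sum_(j | j != i) w j = 0 by move: w1'; rewrite wi1; lra.
    exact: (psumr_eq0P (fun k _ => w0 k) Hs).
  have -> : x = S`_i.
    rewrite xE (bigD1 i) //= wi1 scale1r big1 ?addr0 // => j /H0 ->.
    by rewrite scale0r.
  exact: mem_nth.
have wlt : w i < 1 by rewrite lt_neqAle wi1 /=; lra.
pose t := w i.
pose w' := fun j => if j == i then 0 else w j / (1 - t).
have Si : conv S S`_i.
  exists (fun j => (j == i)%:R); split; first by move=> j; case: (j == i).
  by rewrite sum_delta sum_delta_s.
have y_conv : conv S (\sum_j w' j *: S`_j).
  exists w'; split.
    move=> j; rewrite /w'; case: (j == i) => //.
    by apply: divr_ge0 => //; rewrite subr_ge0 ltW.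
  split => //.
  rewrite (bigD1 i) //= /w' eqxx add0r.
  rewrite (eq_bigr (fun j => w j / (1 - t))); last by move=> j /negbTE ->.
  rewrite -mulr_suml.
  have -> : \sum_(j | j != i) w j = 1 - t by rewrite /t; lra.
  by rewrite divff // subr_eq0 eq_sym.
have [] := ext _ _ t Si y_conv.
- by apply/andP; split.
- rewrite xE scaler_sumr (bigD1 i) //= [X in _ = _ + X](bigD1 i) //= /w' eqxx.
  rewrite scale0r scaler0 add0r; congr (_ + _).
  apply: eq_bigr => j /negbTE ->; rewrite scalerA mulrCA divff ?mulr1 //.
  by rewrite subr_eq0 eq_sym.
by move=> <- _; apply: mem_nth.
Qed.


Definition Sseq (f : V) := rcons [seq evec R i | i <- enum 'I_d] (- f).

Lemma sizeS f : size (Sseq f) = d.+1.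
Proof. by rewrite size_rcons size_map size_enum_ord. Qed.

Lemma nthS_lt f (j : 'I_d) : (Sseq f)`_j = evec R j.
Proof.
rewrite nth_rcons size_map size_enum_ord ltn_ord (nth_map j) ?size_enum_ord //.
by rewrite nth_ord_enum.
Qed.

Lemma nthS_d f : (Sseq f)`_d = - f.
Proof. by rewrite nth_rcons size_map size_enum_ord ltnn eqxx. Qed.

Lemma sumS (W : nmodType) f (F : 'I_(size (Sseq f)) -> W) :
  \sum_i F i = \sum_(j < d) F (cast_ord (esym (sizeS f)) (widen_ord (leqnSn d) j))
     + F (cast_ord (esym (sizeS f)) ord_max).
Proof.
rewrite (reindex (cast_ord (esym (sizeS f)))) /=; first by rewrite big_ord_recr.
exists (cast_ord (sizeS f)) => k _; apply: val_inj => //.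
Qed.

Lemma row_sum_evec (W : 'I_d -> R) : \sum_j W j *: evec R j = \row_i W i.
Proof.
apply/rowP => i; rewrite summxE !mxE.
rewrite (bigD1 i) //= !mxE eqxx mulr1 big1 ?addr0 // => j /negbTE ji.
by rewrite !mxE ji mulr0.
Qed.

Lemma simplex_char f x : simplexP f x <->
  exists (W : 'I_d -> R) (l : R), [/\ forall i, 0 <= W i, 0 <= l,
     \sum_i W i + l = 1 & x = \row_i W i - l *: f].
Proof.
split.
  move=> [w [w0 [w1 ->]]].
  exists (fun j => w (cast_ord (esym (sizeS f)) (widen_ord (leqnSn d) j))).
  exists (w (cast_ord (esym (sizeS f)) ord_max)).
  split => //; first by rewrite -sumS.
  rewrite sumS /= nthS_d scalerN -row_sum_evec; congr (_ - _).
  by apply: eq_bigr => j _; rewrite nthS_lt.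
move=> [W [l [W0 l0 Wl ->]]].
pose wd := fun k : 'I_d.+1 => if unlift ord_max k is Some j then W j else l.
exists (fun i => wd (cast_ord (sizeS f) i)).
have wdw : forall j, wd (widen_ord (leqnSn d) j) = W j.
  move=> j; rewrite /wd.
  have -> : widen_ord (leqnSn d) j = lift ord_max j by by apply: ord_inj; rewrite /= /bump leqNgt ltn_ord.
  by rewrite liftK.
have wdm : wd ord_max = l by rewrite /wd unlift_none.
split.
  by move=> i; rewrite /wd; case: unlift.
rewrite !sumS /= !cast_ordKV wdm; split.
  rewrite -Wl; congr (_ + _); by apply: eq_bigr => j _; rewrite cast_ordKV wdw.
rewrite nthS_d scalerN -row_sum_evec; congr (_ - _).
by apply: eq_bigr => j _; rewrite cast_ordKV wdw nthS_lt.
Qed.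

End Gen.

Section Dot.
Variable R : realType.
Variable d : nat.
Notation V := 'rV[R]_d.
Notation dot := (@dotv R d).

Lemma dotvDl (u v w : V) : dot (u + v) w = dot u w + dot v w.
Proof. by rewrite /dotv -big_split; apply: eq_bigr => i _; rewrite mxE mulrDl. Qed.
Lemma dotvBl (u v w : V) : dot (u - v) w = dot u w - dot v w.
Proof. by rewrite /dotv -sumrB; apply: eq_bigr => i _; rewrite !mxE mulrBl. Qed.
Lemma dotvZl k (u w : V) : dot (k *: u) w = k * dot u w.
Proof. by rewrite /dotv mulr_sumr; apply: eq_bigr => i _; rewrite mxE mulrA. Qed.
Lemma dotvDr (u v w : V) : dot u (v + w) = dot u v + dot u w.
Proof. by rewrite /dotv -big_split; apply: eq_bigr => i _; rewrite mxE mulrDr. Qed.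
Lemma dotvZr k (u w : V) : dot u (k *: w) = k * dot u w.
Proof. by rewrite /dotv mulr_sumr; apply: eq_bigr => i _; rewrite mxE mulrCA. Qed.
Lemma dotvNr (u w : V) : dot u (- w) = - dot u w.
Proof. by rewrite /dotv -sumrN; apply: eq_bigr => i _; rewrite mxE mulrN. Qed.
Lemma dotv_evecr (u : V) j : dot u (evec R j) = u ord0 j.
Proof.
rewrite /dotv (bigD1 j) //= !mxE eqxx mulr1 big1 ?addr0 // => i /negbTE ij.
by rewrite !mxE eq_sym ij mulr0.
Qed.
Lemma dotv_evecl (u : V) j : dot (evec R j) u = u ord0 j.
Proof.
rewrite /dotv (bigD1 j) //= !mxE eqxx mul1r big1 ?addr0 // => i /negbTE ij.
by rewrite !mxE eq_sym ij mul0r.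
Qed.
Lemma dotv_rowr (u : V) (W : 'I_d -> R) :
  dot u (\row_i W i) = \sum_i u ord0 i * W i.
Proof. by apply: eq_bigr => i _; rewrite mxE. Qed.

Lemma vertex_perturb (Q : set V) u del :
  vertices Q u -> Q (u + del) -> Q (u - del) -> del = 0.
Proof.
move=> [_ ext] Q1 Q2.
have [h1 _] := ext _ _ (2^-1) Q1 Q2 ltac:(apply/andP; split; lra)
  ltac:(apply/rowP => i; rewrite !mxE; lra).
by apply/rowP => i; move/rowP: h1 => /(_ i); rewrite !mxE; lra.
Qed.

Lemma tight (m x y t : R) : 0 < t < 1 -> m <= x -> m <= y ->
  t * x + (1 - t) * y = m -> x = m /\ y = m.
Proof. move=> /andP[t0 t1] hx hy e; split; nra. Qed.

End Dot.

Section Main.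
Variable R : realType.
Variable d : nat.
Notation V := 'rV[R]_d.
Variable a : 'I_d -> nat.
Variable b : nat.
Hypothesis ha : forall i, (0 < a i)%N.
Hypothesis hb : (0 < b)%N.

Let f : V := fvec R a b.
Let P := simplexP f.

Definition Qc (u : V) := (forall i, -1 <= u ord0 i) /\ dotv u f <= 1.

Lemma fpos i : 0 < f ord0 i.
Proof. by rewrite /f /fvec mxE divr_gt0 // ltr0n. Qed.

Lemma sum_f : \sum_i f ord0 i = (\sum_i a i)%:R / b%:R.
Proof. by rewrite natr_sum mulr_suml; apply: eq_bigr => i _; rewrite /f mxE. Qed.

Lemma polar_char u : polar P u <-> Qc u.
Proof.
split.
  move=> H; split.
    move=> i; have := H (evec R i).
    rewrite dotv_evecr; apply; apply/simplex_char.
    exists (fun k => (k == i)%:R), 0; split.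
    - by move=> k; case: (k == i).
    - by [].
    - by rewrite addr0 sum_delta.
    - by rewrite scale0r subr0; apply/rowP => k; rewrite !mxE eq_sym.
  have := H (- f); rewrite dotvNr => h.
  suff : -1 <= - dotv u f by lra.
  apply: h; apply/simplex_char; exists (fun=> 0), 1; split => //.
  - by rewrite big1 ?add0r.
  - by rewrite scale1r; apply/rowP => k; rewrite !mxE add0r.
move=> [H1 H2] v /simplex_char [W [l [W0 l0 Wl ->]]].
rewrite dotvDr dotvNr dotvZr dotv_rowr.
have h : \sum_i (- W i) <= \sum_i u ord0 i * W i.
  by apply: ler_sum => i _; have := H1 i; have := W0 i; nra.
rewrite sumrN in h.
have h2 : l * dotv u f <= l by nra.
lra.
Qed.

Lemma dot_split (u : V) j :
  dotv u f = u ord0 j * f ord0 j + \sum_(i | i != j) u ord0 i * f ord0 i.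
Proof. by rewrite /dotv (bigD1 j). Qed.

Lemma uniq_j (u w : V) j : (forall i, i != j -> u ord0 i = -1) ->
  (forall i, i != j -> w ord0 i = -1) -> dotv u f = dotv w f -> u = w.
Proof.
move=> hu hw e; apply/rowP => i.
have [->|ij] := eqVneq i j; last by rewrite hu // hw.
move: e; rewrite (dot_split u j) (dot_split w j).
rewrite (eq_bigr (fun i => -1 * f ord0 i)); last by move=> k /hu ->.
rewrite [in X in _ = X -> _](eq_bigr (fun i => -1 * f ord0 i)); last by move=> k /hw ->.
move/addIr; apply: mulIf; rewrite gt_eqF //; exact: fpos.
Qed.

Lemma Q_pm (u del : V) : Qc u -> dotv del f = 0 ->
  (forall i, `|del ord0 i| <= u ord0 i + 1) -> Qc (u + del) /\ Qc (u - del).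
Proof.
move=> [H1 H2] hd hi; split; split.
- by move=> i; rewrite !mxE; move: (hi i); rewrite ler_norml => /andP[]; lra.
- by rewrite dotvDl hd addr0.
- by move=> i; rewrite !mxE; move: (hi i); rewrite ler_norml => /andP[]; lra.
- by rewrite dotvBl hd subr0.
Qed.


Lemma classify u : vertices (polar P) u ->
  (forall i, u ord0 i = -1) \/
  exists j, (forall i, i != j -> u ord0 i = -1) /\ dotv u f = 1.
Proof.
move=> vu; have [Qu _] := vu.
have [H1 H2] := (polar_char u).1 Qu.
have Qp : forall v, Qc v -> polar P v by move=> v /polar_char.
case: (eqVneq (dotv u f) 1) => hf.
  case: (boolP [exists j, u ord0 j != -1]) => [/existsP [j hj] | /existsPn hn];
    last by left => i; apply/eqP; have := hn i; rewrite negbK.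
  right; exists j; split => // k kj.
  apply/eqP/negPn/negP => hk.
  have hj' : -1 < u ord0 j by rewrite lt_neqAle eq_sym hj H1.
  have hk' : -1 < u ord0 k by rewrite lt_neqAle eq_sym hk H1.
  have ak0 : 0 < (a k)%:R :> R by rewrite ltr0n.
  have aj0 : 0 < (a j)%:R :> R by rewrite ltr0n.
  pose e := Num.min ((u ord0 j + 1) / (a k)%:R) ((u ord0 k + 1) / (a j)%:R).
  have e0 : 0 < e by rewrite lt_min; apply/andP; split; apply: divr_gt0 => //; lra.
  have e1 : e * (a k)%:R <= u ord0 j + 1 by rewrite -ler_pdivlMr // ge_min lexx.
  have e2 : e * (a j)%:R <= u ord0 k + 1 by rewrite -ler_pdivlMr // ge_min lexx orbT.
  pose del := e *: ((a k)%:R *: evec R j - (a j)%:R *: evec R k).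
  have hd : dotv del f = 0.
    rewrite /del dotvZl dotvBl !dotvZl !dotv_evecl /f !mxE.
    by rewrite mulrA [_ * (a j)%:R]mulrC -mulrA subrr mulr0.
  have [Q1 Q2] : Qc (u + del) /\ Qc (u - del).
    apply: Q_pm => // i; rewrite /del !mxE.
    have [<-|ji] := eqVneq j i.
      rewrite (negbTE kj) /= mulr1 mulr0 subr0 ger0_norm; last first.
        by apply: mulr_ge0; lra.
      exact: e1.
    have [<-|ki] := eqVneq k i.
      rewrite /= mulr1 mulr0 sub0r mulrN normrN ger0_norm; last first.
        by apply: mulr_ge0; lra.
      exact: e2.
    by rewrite /= !mulr0 subr0 mulr0 normr0; have := H1 i; lra.
  have := @vertex_perturb R d _ _ _ vu (Qp _ Q1) (Qp _ Q2).
  move/rowP => /(_ j); rewrite /del !mxE eqxx (negbTE kj) mulr1 mulr0 subr0.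
  by move/eqP; rewrite mulf_eq0 !gt_eqF.
have hf' : dotv u f < 1 by rewrite lt_neqAle hf H2.
left => j; apply/eqP/negPn/negP => hj.
have hj' : -1 < u ord0 j by rewrite lt_neqAle eq_sym hj H1.
have fj := fpos j.
pose e := Num.min (u ord0 j + 1) ((1 - dotv u f) / f ord0 j).
have e0 : 0 < e.
  by rewrite lt_min; apply/andP; split; [lra | apply: divr_gt0 => //; lra].
have e1 : e <= u ord0 j + 1 by rewrite ge_min lexx.
have e2 : e * f ord0 j <= 1 - dotv u f by rewrite -ler_pdivlMr // ge_min lexx orbT.
have e3 : 0 <= e * f ord0 j by apply: mulr_ge0; lra.
pose del := e *: evec R j.
have Q1 : Qc (u + del).
  split; last by rewrite dotvDl dotvZl dotv_evecl; lra.
  move=> i; rewrite /del !mxE; have := H1 i.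
  by case: (j == i); rewrite ?mulr1 ?mulr0; lra.
have Q2 : Qc (u - del).
  split; last by rewrite dotvBl dotvZl dotv_evecl; lra.
  move=> i; rewrite /del !mxE; have := H1 i.
  by case: (eqVneq j i) => [<-|_]; rewrite ?mulr1 ?mulr0; lra.
have := @vertex_perturb R d _ _ _ vu (Qp _ Q1) (Qp _ Q2).
move/rowP => /(_ j); rewrite /del !mxE eqxx mulr1; lra.
Qed.


Let Ssum := (\sum_i a i)%N.
Definition u0 : V := \row_i (-1).
Definition uj j : V :=
  \row_i (if i == j then (b%:R + Ssum%:R) / (a j)%:R - 1 else -1).

Lemma b0 : (b%:R : R) != 0.
Proof. by rewrite pnatr_eq0 -lt0n. Qed.
Lemma aj0 j : ((a j)%:R : R) != 0.
Proof. by rewrite pnatr_eq0 -lt0n. Qed.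

Lemma dot_u0 : dotv u0 f = - (Ssum%:R / b%:R).
Proof.
rewrite /dotv -sum_f -sumrN; apply: eq_bigr => i _; by rewrite mxE mulN1r.
Qed.

Lemma sum_f_except j : \sum_(i | i != j) f ord0 i = Ssum%:R / b%:R - f ord0 j.
Proof. by rewrite -sum_f [in RHS](bigD1 j) //=; lra. Qed.

Lemma dot_uj j : dotv (uj j) f = 1.
Proof.
rewrite (dot_split _ j).
rewrite (eq_bigr (fun i => - f ord0 i)); last first.
  by move=> i /negbTE ij; rewrite mxE ij mulN1r.
rewrite sumrN sum_f_except /f !mxE eqxx.
have := b0; have := aj0 j; move=> h1 h2.
field.
by apply/andP; split.
Qed.

Lemma vertex_u0 : vertices (polar P) u0.
Proof.
split.
  apply/polar_char; split; first by move=> i; rewrite mxE.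
  rewrite dot_u0; have : 0 <= (Ssum%:R / b%:R : R) by apply: divr_ge0.
  lra.
move=> x y t /polar_char [Hx _] /polar_char [Hy _] tt E.
have h : forall i, x ord0 i = -1 /\ y ord0 i = -1.
  move=> i; apply: (@tight R _ _ _ t tt (Hx i) (Hy i)).
  by move/rowP: E => /(_ i); rewrite !mxE => ->.
by split; apply/rowP => i; rewrite [RHS]mxE; case: (h i).
Qed.

Lemma uj_Q j : Qc (uj j).
Proof.
split; last by rewrite dot_uj.
move=> i; rewrite mxE; case: (i == j) => //.
have : (0 : R) <= (b%:R + Ssum%:R) / (a j)%:R by rewrite -natrD divr_ge0.
lra.
Qed.

Lemma vertex_uj j : vertices (polar P) (uj j).
Proof.
split; first by apply/polar_char; apply: uj_Q.
move=> x y t /polar_char [Hx Hfx] /polar_char [Hy Hfy] tt E.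
have h : forall i, i != j -> x ord0 i = -1 /\ y ord0 i = -1.
  move=> i ij; apply: (@tight R _ _ _ t tt (Hx i) (Hy i)).
  by move/rowP: E => /(_ i); rewrite !mxE (negbTE ij) => ->.
have hf : dotv x f = 1 /\ dotv y f = 1.
  have : t * (- dotv x f) + (1 - t) * (- dotv y f) = -1.
    by have := dot_uj j; rewrite E dotvDl !dotvZl; lra.
  move/(@tight R _ _ _ t tt); rewrite !lerN2 => hh; have [] := hh Hfx Hfy; lra.
have hu : forall i, i != j -> uj j ord0 i = -1.
  by move=> i ij; rewrite mxE (negbTE ij).
case: hf => hfx hfy; split.
  by apply: (uniq_j x (uj j) j) => //; [move=> i /h [] | rewrite hfx dot_uj].
by apply: (uniq_j y (uj j) j) => //; [move=> i /h [] | rewrite hfy dot_uj].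
Qed.


Lemma dual_int (u : V) : (forall i, exists m : int, u ord0 i = m%:~R) ->
  (exists n : int, dotv u f = n%:~R) -> dual_lattice (latticeN' f) u.
Proof.
move=> Hu [n Hn] v [z [k ->]].
rewrite dotvDr dotvZr dotv_rowr Hn.
have [m Hm] : exists m : int, \sum_i u ord0 i * (z i)%:~R = m%:~R.
  apply: (big_ind (fun x => exists m : int, x = m%:~R)).
  - by exists 0.
  - by move=> x y [m1 ->] [m2 ->]; exists (m1 + m2); rewrite intrD.
  - by move=> i _; have [m ->] := Hu i; exists (m * z i); rewrite intrM.
by exists (m + k * n); rewrite Hm intrD intrM.
Qed.

Lemma f_lat : latticeN' f f.
Proof.
exists (fun _ => 0), 1; apply/rowP => i; rewrite !mxE.
by rewrite mulr0z add0r mul1r.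
Qed.

Lemma evec_lat j : latticeN' f (evec R j).
Proof.
exists (fun i => (j == i)%:Z), 0; apply/rowP => i; rewrite !mxE.
by rewrite mulr0z mul0r addr0 -pmulrn.
Qed.

Lemma lat_poly : lattice_polytope (latticeN' f) P.
Proof.
move=> x /(@conv_vertex R d (Sseq R d f)); rewrite /Sseq.
rewrite mem_rcons in_cons => /orP [/eqP -> | /mapP [j _ ->]].
  exists (fun _ => 0), (-1); apply/rowP => i; rewrite !mxE.
  by rewrite mulr0z add0r mulN1r.
exact: evec_lat.
Qed.


Lemma int0 : interior P 0.
Proof.
suff [e e0 H] : exists2 e : R, 0 < e &
    forall v : V, (forall i, `|v ord0 i| < e) -> P v.
  rewrite /interior; apply/(@nbhs_ballP R); exists e => //= v.
  move=> [_ Hb]; apply: H => i; have := Hb ord0 i.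
  by rewrite /ball /= !mxE sub0r normrN.
pose K := 1 + \sum_i f ord0 i.
have sf0 : 0 <= \sum_i f ord0 i by apply: sumr_ge0 => i _; apply: ltW; apply: fpos.
have K1 : 1 <= K by rewrite /K; lra.
have bR : (1 : R) <= b%:R by rewrite ler1n.
have dR : (0 : R) <= d%:R by [].
pose M := 2 * (d%:R + 1) * b%:R * K.
have M0 : 0 < M by rewrite /M; apply: mulr_gt0; [apply: mulr_gt0; [apply: mulr_gt0|]|]; lra.
pose e := M^-1.
have eM : e * M = 1 by rewrite /e mulVf // gt_eqF.
have e0 : 0 < e by rewrite /e invr_gt0.
exists e => // v hv.
have hsum : `|\sum_i v ord0 i| <= d%:R * e.
  apply: le_trans (ler_norm_sum _ _ _) _.
  apply: le_trans (_ : \sum_(i < d) e <= _).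
    by apply: ler_sum => i _; apply: ltW.
  by rewrite sumr_const card_ord mulr_natl.
have bK : 1 <= b%:R * K by nra.
have ME : M = 2 * (d%:R + 1) * (b%:R * K) by rewrite /M; ring.
have de : d%:R * e * 2 <= 1.
  have : 2 * d%:R <= M.
    rewrite ME; have : 0 <= (d%:R + 1) * (b%:R * K - 1) by apply: mulr_ge0; lra.
    nra.
  nra.
move: hsum; rewrite ler_norml => /andP [hs1 hs2].
pose l := (1 - \sum_i v ord0 i) / K.
have lK : l * K = 1 - \sum_i v ord0 i by rewrite /l divfK // gt_eqF //; lra.
have K0 : 0 < K by lra.
have hA : 1 <= l * K * 2 by lra.
have hB : e * b%:R * K * 2 <= 1.
  have : 2 * (b%:R * K) <= M.
    rewrite ME; have : 0 <= d%:R * (b%:R * K) by apply: mulr_ge0; lra.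
    nra.
  nra.
have hC : e * b%:R <= l by nra.
have l0 : 0 <= l by nra.
apply/simplex_char.
exists (fun i => v ord0 i + l * f ord0 i), l; split => //.
- move=> i; have fi : 1 <= f ord0 i * b%:R.
    by rewrite /f mxE divfK ?b0 // ler1n.
  have : -e <= v ord0 i by move: (hv i); rewrite ltr_norml => /andP[] h _; lra.
  have : l <= l * f ord0 i * b%:R by nra.
  nra.
- rewrite big_split /= -mulr_sumr.
  have : l * \sum_i f ord0 i + l = l * K by rewrite /K; ring.
  lra.
- by apply/rowP => i; rewrite !mxE; ring.
Qed.


Lemma main_iff : reflexive_polytope (latticeN' f) P <->
  exists c : int, (Ssum)%:Z = b%:Z * c /\
    forall i, ((a i)%:Z %| b%:Z * (c + 1))%Z.
Proof.
split.
  move=> [_ _ Hd].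
  have [n hn] := Hd _ vertex_u0 f f_lat.
  rewrite dot_u0 in hn.
  have h1 : (Ssum%:R / b%:R : R) = - n%:~R by rewrite -hn opprK.
  have hS : (Ssum%:R : R) = - n%:~R * b%:R by rewrite -h1 divfK // b0.
  exists (-n); split.
    apply: (@intr_inj R); rewrite intrM intrN -!pmulrn hS; ring.
  move=> i; have [m hm] := Hd _ (vertex_uj i) _ (evec_lat i).
  rewrite dotv_evecr mxE eqxx in hm.
  have hA : (b%:R + Ssum%:R : R) = (m%:~R + 1) * (a i)%:R.
    rewrite -hm; have := aj0 i; move=> hi; field.
    exact: hi.
  apply/dvdzP; exists (m + 1); apply: (@intr_inj R).
  rewrite !intrM !intrD intrN -!pmulrn.
  rewrite -hA hS; ring.
move=> [c [hc hdiv]].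
have hS : (Ssum%:R : R) = b%:R * c%:~R.
  by have := congr1 (fun z : int => z%:~R : R) hc; rewrite /= intrM -!pmulrn.
split; [exact: lat_poly | exact: int0 |].
move=> u /classify [H0 | [j [Hj Hfj]]].
  apply: dual_int.
    by move=> i; exists (-1); rewrite H0 mulrN1z.
  exists (-c); have -> : u = u0 by apply/rowP => i; rewrite H0 mxE.
  rewrite dot_u0 hS intrN; have := b0 => h0; field; exact: h0.
have ue : u = uj j.
  apply: (uniq_j u (uj j) j) => //; first by move=> i ij; rewrite mxE (negbTE ij).
  by rewrite Hfj dot_uj.
have [k hk] := dvdzP (hdiv j).
have hk' : (b%:R * (c%:~R + 1) : R) = k%:~R * (a j)%:R.
  have := congr1 (fun z : int => z%:~R : R) hk.
  by rewrite /= !intrM intrD -!pmulrn.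
apply: dual_int; last by exists 1; rewrite Hfj.
move=> i; rewrite ue mxE; case: ifP => _; last by exists (-1); rewrite mulrN1z.
exists (k - 1); rewrite intrD mulrN1z hS.
have e2 : (b%:R + b%:R * c%:~R : R) = k%:~R * (a j)%:R by rewrite -hk'; ring.
rewrite e2; have := aj0 j => hj0; field; exact: hj0.
Qed.

End Main.

Theorem proposition4p1 (R : realType) (d : nat) (a : 'I_d -> nat) (b : nat)
  (ha : forall i, (0 < a i)%N) (hb : (0 < b)%N) :
  reflexive_polytope (latticeN' (fvec R a b)) (simplexP (fvec R a b)) <->
  exists c : int, (\sum_(i < d) a i)%:Z = b%:Z * c /\
    forall i, ((a i)%:Z %| b%:Z * (c + 1))%Z.
Proof. exact: (@main_iff R d a b ha hb). Qed.
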